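(* Let $P$ be a rooted tree poset with $n$ elements and let $L$ be a labeling of $P$ such that $L^{-1}(n)$ is the maximal element (root) of $P$. Let $b$ be the highest branch vertex of $P$, let $c_1<_P\cdots<_P c_k$ be the $L$-golden elements $x$ with $x\ge_P b$ (these form a chain, and $c_k$ is the root), and let $\mathcal M$ be the set of maximal $L$-golden rooted subtrees of $P$ whose roots are less than $b$. Then \[|\partial^{-1}(L)|=2^{k-1}+\sum_{T\in\mathcal M}\sum_{x\in T}2^{\omega_T(x)+k-2},\] where $\omega_T(x)$ is the number of elements on the path $x=p_1\lessdot p_2\lessdot\cdots\lessdot p_{\omega_T(x)}$ from $x$ to the root of $T$ in the Hasse diagram of the induced subposet $T$.
   Context: A labeling of an $n$-element poset $P$ is a bijection $L:P\to[n]$; promotion $\partial$ is defined as follows: for non-maximal $x$, the $L$-successor of $x$ is the element greater than $x$ with minimal label; the promotion chain is $v_1=L^{-1}(1)$, $v_{i+1}$ the $L$-successor of $v_i$, ending at the first maximal element $v_m$; $\partial(L)(x)=L(x)-1$ for $x$ off the chain, $\partial(L)(v_i)=L(v_{i+1})-1$ for $i<m$, $\partial(L)(v_m)=n$. A rooted tree poset is a connected poset in which every element is covered by at most one element (so it has a unique maximal element, the root). An element $x$ is $L$-golden if $L(y)>L(x)$ for all $y>_P x$; a set is $L$-golden if all its elements are. A subset of $P$ is a subtree if its induced subposet is a rooted tree poset. The highest branch vertex $b$ is the largest element of $P$ that covers more than one element (if no element covers more than one element, i.e. $P$ is a chain, take $b$ to be the minimum of $P$); the set $\{x: x\ge_P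 b\}$ is a chain. Here $\mathcal M$ consists of the maximal subsets $T$ of $\{x\in P: x \text{ is } L\text{-golden},\ x<_P b\}$ whose induced subposet is a rooted tree (equivalently, the connected components of the induced subposet on that set). *)

(* Defs.v *)
From HB Require Import structures.
From mathcomp Require Import all_boot all_order.
Set Implicit Arguments.
Unset Strict Implicit.
Unset Printing Implicit Defensive.
Import Order.TTheory.

Section PosetDefs.
Context {d : Order.disp_t} {P : finPOrderType d}.

Definition covers_in (S : {set P}) (x y : P) : bool :=
  [&& x \in S, y \in S, (x < y)%O & ~~ [exists z, [&& z \in S, (x < z)%O & (z < y)%O]]].

Definition comp_rel_in (S : {set P}) : rel P :=
  fun x y => [&& x \in S, y \in S & (x >=< y)%O].

Definition is_rooted_tree_on (S : {set P}) : bool :=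
  [&& S != set0,
      [forall x in S, forall y in S, connect (comp_rel_in S) x y] &
      [forall x, forall y1, forall y2,
          covers_in S x y1 ==> covers_in S x y2 ==> (y1 == y2)]].

Definition is_rooted_tree : bool := is_rooted_tree_on setT.

Definition is_labeling (L : P -> nat) : Prop :=
  injective L /\ forall x, 1 <= L x <= #|P|.

(* L-successor of x: the element greater than x with minimal label
   (returns x itself when x is maximal) *)
Definition Lsucc (L : P -> nat) (x : P) : P :=
  odflt x [pick y | (x < y)%O && [forall z, (x < z)%O ==> (L y <= L z)]].

Definition is_maximal (x : P) : bool := [forall y, ~~ (x < y)%O].

(* the promotion chain v_1 = L^{-1}(1), v_{i+1} = Lsucc v_i, ending at the
   first maximal element (iterating past it stays put) *)
Definition promotion_chain (L : P -> nat) : {set P} :=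
  if [pick x | L x == 1] is Some v1
  then [set iter (nat_of_ord i) (Lsucc L) v1 | i : 'I_#|P|]
  else set0.

Definition promotion (L : P -> nat) (x : P) : nat :=
  if x \in promotion_chain L then
    (if is_maximal x then #|P| else (L (Lsucc L x)).-1)
  else (L x).-1.

Definition labelings : {set {ffun P -> 'I_(#|P|).+1}} :=
  [set L : {ffun P -> 'I_(#|P|).+1} | injectiveb L && [forall x, 0 < nat_of_ord (L x)]].

Definition promotion_preimage_card (L : P -> nat) : nat :=
  #|[set L' in labelings |
      [forall x, promotion (fun y => nat_of_ord (L' y)) x == L x]]|.

Definition golden (L : P -> nat) (x : P) : bool :=
  [forall y, (x < y)%O ==> (L x < L y)].

Definition is_branch (x : P) : bool :=
  1 < #|[set y | covers_in setT y x]|.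

(* b is the highest branch vertex (the minimum of P if P is a chain) *)
Definition is_highest_branch_vertex (b : P) : bool :=
  if [exists x, is_branch x]
  then is_branch b && [forall x, is_branch x ==> (x <= b)%O]
  else [forall x, (b <= x)%O].

Definition golden_below (L : P -> nat) (b : P) : {set P} :=
  [set x | golden L x & (x < b)%O].

Definition maxGoldenSubtrees (L : P -> nat) (b : P) : {set {set P}} :=
  [set T | maxset (fun S : {set P} =>
                     (S \subset golden_below L b) && is_rooted_tree_on S) T].

(* ω_T(x): number of elements on the Hasse-diagram path from x to the root
   of T, i.e. the number of elements of T that are >= x *)
Definition omega (T : {set P}) (x : P) : nat := #|[set y in T | (x <= y)%O]|.

End PosetDefs.

(* Main.v *)
Require Import Defs.
From HB Require Import structures.
From mathcomp Require Import all_boot all_order zify.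
From Stdlib Require Import FunctionalExtensionality.
Import Order.TTheory.
Set Implicit Arguments. Unset Strict Implicit. Unset Printing Implicit Defensive.

Section Surj.
Context {d : Order.disp_t} {P : finPOrderType d}.
Lemma lab_surj (f : P -> nat) : injective f -> (forall x, 1 <= f x <= #|P|) ->
  forall v, 1 <= v <= #|P| -> exists x, f x = v.
Proof.
move=> finj fb v hv.
have u : uniq (map f (enum P)) by rewrite map_inj_uniq ?enum_uniq.
have sub : {subset map f (enum P) <= iota 1 #|P|}.
  by move=> y /mapP[x _ ->]; rewrite mem_iota; have := fb x; lia.
have hs : size (iota 1 #|P|) <= size (map f (enum P)) by rewrite size_iota size_map -cardE.
have [_ eqs] := uniq_min_size u sub hs.
have : v \in iota 1 #|P| by rewrite mem_iota; lia.
by rewrite -eqs => /mapP[x _ ->]; exists x.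
Qed.
End Surj.

Section Tree.
Context {d : Order.disp_t} {P : finPOrderType d}.
Hypothesis htree : forall x y1 y2 : P, covers_in setT x y1 -> covers_in setT x y2 -> y1 = y2.

Lemma cover_above (x y : P) : (x < y)%O -> exists2 c, covers_in setT x c & (c <= y)%O.
Proof.
move=> xy.
have H : (fun c => (x < c)%O && (c <= y)%O) y by rewrite /= xy lexx.
case: (@arg_minnP _ y (fun c => (x < c)%O && (c <= y)%O) (fun c => #|[set u : P | (u < c)%O]|) H) => c /andP[xc cy] cmin.
exists c => //.
rewrite /covers_in !in_setT xc /=; apply/existsP => -[z /and3P[_ xz zc]].
have := cmin z; rewrite xz (le_trans (ltW zc) cy) => /(_ isT).
apply/negP; rewrite -ltnNge; apply: proper_card; apply/properP; split.
  by apply/subsetP => u; rewrite !inE => uz; apply: lt_trans uz zc.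
by exists z; rewrite !inE ?zc ?ltxx.
Qed.

Lemma up_chain_n n (x y z : P) : #|[set w | (x < w)%O]| <= n -> (x < y)%O -> (x < z)%O -> (y <= z)%O || (z <= y)%O.
Proof.
elim: n x => [|n IH] x hn xy xz.
  by move: hn; rewrite leqn0 => /eqP/cards0_eq/setP/(_ y); rewrite !inE xy.
have [c1 cov1 c1y] := cover_above xy.
have [c2 cov2 c2z] := cover_above xz.
have e := htree cov1 cov2; subst c2.
move: c1y c2z; rewrite le_eqVlt => /orP[/eqP<-|c1y]; first by move=> ->.
rewrite le_eqVlt => /orP[/eqP<-|c1z]; first by rewrite (ltW c1y) orbT.
have xc : (x < c1)%O by move: cov1 => /and4P[].
apply: (IH c1) => //.
rewrite -ltnS; apply: leq_trans hn; apply: proper_card; apply/properP; split.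
  by apply/subsetP => u; rewrite !inE => uz; apply: lt_trans xc uz.
by exists c1; rewrite !inE ?xc ?ltxx.
Qed.

Lemma up_chain (x y z : P) : (x <= y)%O -> (x <= z)%O -> (y <= z)%O || (z <= y)%O.
Proof.
rewrite le_eqVlt => /orP[/eqP<-|xy]; first by move=> ->.
rewrite le_eqVlt => /orP[/eqP<-|xz]; first by rewrite (ltW xy) orbT.
exact: (@up_chain_n #|[set w | (x < w)%O]|).
Qed.

Variable (r : P).
Hypothesis rtop : forall y : P, (y <= r)%O.

Lemma lt_r (x : P) : x != r -> (x < r)%O.
Proof. by move=> xr; rewrite lt_neqAle xr rtop. Qed.

Lemma ltr_F (y : P) : (r < y)%O = false.
Proof. by apply/negbTE/negP => ry; move: (lt_le_trans ry (rtop y)); rewrite ltxx. Qed.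

Lemma max_r (x : P) : is_maximal x = (x == r).
Proof.
apply/forallP/eqP => [h|->]; last by move=> y; rewrite ltr_F.
by apply/eqP/negPn/negP => /lt_r xr; move: (h r); rewrite xr.
Qed.

Lemma Lsucc_r (f : P -> nat) : Lsucc f r = r.
Proof. by rewrite /Lsucc; case: pickP => // y /andP[]; rewrite ltr_F. Qed.

Lemma Lsucc_eq (f : P -> nat) x s : injective f -> (x < s)%O ->
  (forall z, (x < z)%O -> f s <= f z) -> Lsucc f x = s.
Proof.
move=> finj xs H; rewrite /Lsucc; case: pickP => [y /andP[xy /forallP hy]|/(_ s)] /=.
  have h1 := hy s; rewrite xs /= in h1.
  by apply: finj; apply/eqP; rewrite eqn_leq h1 H.
rewrite xs /=; move/negP; case; apply/forallP => z; apply/implyP; exact: H.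
Qed.

Lemma Lsucc_spec (f : P -> nat) x : x != r ->
  (x < Lsucc f x)%O /\ (forall z, (x < z)%O -> f (Lsucc f x) <= f z).
Proof.
move=> xr.
have H : (fun z => (x < z)%O) r by exact: lt_r.
case: (@arg_minnP _ r (fun z => (x < z)%O) f H) => m xm mmin.
rewrite /Lsucc; case: pickP => [y /andP[xy /forallP hy]|/(_ m)] /=.
  by split=> // z xz; have := hy z; rewrite xz.
rewrite xm /=; move/negP; case; apply/forallP => z; apply/implyP; exact: mmin.
Qed.

Lemma Lsucc_ge (f : P -> nat) x : (x <= Lsucc f x)%O.
Proof.
case: (eqVneq x r) => [->|xr]; first by rewrite Lsucc_r.
by case: (Lsucc_spec f xr) => /ltW.
Qed.

Definition w (f : P -> nat) v i := iter i (Lsucc f) v.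

Lemma w_mono f v i j : i <= j -> (w f v i <= w f v j)%O.
Proof.
elim: j => [|j IH]; first by rewrite leqn0 => /eqP->.
rewrite leq_eqVlt => /orP[/eqP->//|]; rewrite ltnS => /IH h.
by apply: le_trans h _; rewrite /w iterS; apply: Lsucc_ge.
Qed.

Lemma w_stay f v i j : w f v i = r -> w f v (j + i) = r.
Proof. by move=> h; elim: j => // j IH; rewrite addSn /w iterS -/(w _ _ _) IH Lsucc_r. Qed.

Lemma w_meas f v i : w f v i != r -> #|[set z | (w f v i < z)%O]| + i < #|P|.
Proof.
elim: i => [|i IH] hi.
  rewrite addn0 -cardsT; apply: proper_card; apply/properP; split; first exact: subsetT.
  by exists (w f v 0); rewrite ?inE ?ltxx.
have hi' : w f v i != r by apply: contra hi => /eqP h; apply/eqP; rewrite /w iterS -/(w _ _ _) h Lsucc_r.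
have [lt1 _] := Lsucc_spec f hi'.
apply: leq_ltn_trans (IH hi'); rewrite addnS -addSn leq_add2r.
apply: proper_card; apply/properP; split.
  by apply/subsetP => u; rewrite !inE /w iterS => hu; apply: lt_trans lt1 hu.
by exists (w f v i.+1); rewrite !inE ?ltxx // /w iterS.
Qed.

Lemma w_end f v : w f v (#|P|.-1) = r.
Proof.
apply/eqP/negPn/negP => h.
have := w_meas h.
have : 0 < #|[set z | (w f v #|P|.-1 < z)%O]|.
  by apply/card_gt0P; exists r; rewrite inE lt_r.
have : 0 < #|P| by apply/card_gt0P; exists r.
lia.
Qed.

Lemma w_big f v i : #|P|.-1 <= i -> w f v i = r.
Proof. by move=> h; rewrite -(subnK h) w_stay // w_end. Qed.


Variable (L : P -> nat).
Hypothesis Linj : injective L.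
Hypothesis Lbd : forall x, 1 <= L x <= #|P|.
Hypothesis hr : L r = #|P|.

Lemma L_lt_n x : x != r -> L x < #|P|.
Proof.
move=> xr; have := Lbd x => /andP[_]; rewrite leq_eqVlt => /orP[/eqP h|//].
by rewrite -hr in h; move: (Linj h) xr => ->; rewrite eqxx.
Qed.

Definition G := [set x | golden L x].
Definition chainb (C : {set P}) :=
  [forall y in C, forall z in C, (y <= z)%O || (z <= y)%O].
Definition chainF := [set C : {set P} | [&& C \subset G, r \in C & chainb C]].
Definition predC (C : {set P}) x :=
  [pick y in C | (y < x)%O && [forall z in C, ~~ ((y < z)%O && (z < x)%O)]].
Definition mk (C : {set P}) x :=
  if x \in C then (if predC C x is Some p then (L p).+1 else 1) else (L x).+1.

Lemma chainP C y z : chainb C -> y \in C -> z \in C -> (y <= z)%O || (z <= y)%O.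
Proof.
move=> /forallP h yC zC; have := h y; rewrite yC /= => /forallP h2.
by have := h2 z; rewrite zC.
Qed.

Lemma predC_eq C x p : chainb C -> p \in C -> (p < x)%O ->
  (forall z, z \in C -> ~~ ((p < z)%O && (z < x)%O)) -> predC C x = Some p.
Proof.
move=> ch pC px H; rewrite /predC; case: pickP => [q /andP[qC /andP[qx /forallP hq]]|/(_ p)].
  case/orP: (chainP ch qC pC); rewrite le_eqVlt => /orP[/eqP->//|lt].
    by have := hq p; rewrite pC lt px.
  by have := H q qC; rewrite lt qx.
rewrite pC px /=; move/negP; case; apply/forallP => z; apply/implyP; exact: H.
Qed.

Lemma r_golden : golden L r.
Proof. by apply/forallP => y; rewrite ltr_F. Qed.

Lemma chain_of (f : P -> nat) : injective f -> (forall x, 0 < f x) ->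
  (exists v, f v = 1) -> (forall x, promotion f x = L x) ->
  promotion_chain f \in chainF /\ forall x, mk (promotion_chain f) x = f x.
Proof.
move=> finj fpos [v0 fv0] hprom.
have [v fv hC] : exists2 v, f v = 1 & promotion_chain f = [set w f v (nat_of_ord i) | i : 'I_#|P|].
  rewrite /promotion_chain; case: pickP => [v /eqP fv|/(_ v0)]; first by exists v.
  by rewrite fv0 eqxx.
set C := [set w f v (nat_of_ord i) | i : 'I_#|P|] in hC.
have hn : 0 < #|P| by apply/card_gt0P; exists r.
have w_in i : w f v i \in C.
  case: (ltnP i #|P|) => hi; first by apply/imsetP; exists (Ordinal hi).
  rewrite w_big; last by lia.
  have hp : #|P|.-1 < #|P| by lia.
  apply/imsetP; exists (Ordinal hp) => //=; by rewrite w_end.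
have memC y : y \in C -> exists i, y = w f v i by case/imsetP => k _ ->; exists k.
have ch : chainb C.
  apply/forallP => y; apply/implyP => /memC[i1 ->]; apply/forallP => z; apply/implyP => /memC[j ->].
  by case/orP: (leq_total i1 j) => h; rewrite (w_mono f v h) ?orbT.
have pin x : x \in C -> x != r -> L x = (f (Lsucc f x)).-1.
  by move=> xC xr; rewrite -hprom /promotion hC xC max_r (negbTE xr).
have pout x : x \notin C -> L x = (f x).-1.
  by move=> xC; rewrite -hprom /promotion hC (negbTE xC).
rewrite hC; split.
  rewrite inE; apply/and3P; split => //; last first.
    by rewrite -(w_end f v) w_in.
  apply/subsetP => c /memC[i ->]; rewrite inE.
  case: (eqVneq (w f v i) r) => [->|cr]; first exact: r_golden.
  have [cs smin] := Lsucc_spec f cr.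
  have sdef : Lsucc f (w f v i) = w f v i.+1 by rewrite /w iterS.
  apply/forallP => y; apply/implyP => cy.
  rewrite (pin _ (w_in i) cr).
  have fs0 := fpos (Lsucc f (w f v i)).
  case: (boolP (y \in C)) => [/memC[j yj]|yC]; first subst y.
    case: (eqVneq (w f v j) r) => [->|yr].
      by rewrite hr; have := L_lt_n cr; rewrite (pin _ (w_in i) cr).
    rewrite (pin _ (w_in j) yr).
    have ij : i < j.
      rewrite ltnNge; apply/negP => ji; move: (w_mono f v ji) => h.
      by move: (lt_le_trans cy h); rewrite ltxx.
    have [ys _] := Lsucc_spec f yr.
    have s_y : (Lsucc f (w f v i) <= w f v j)%O by rewrite sdef w_mono.
    have hlt := le_lt_trans s_y ys.
    have h1 := smin _ (lt_trans cy ys).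
    have hne : f (Lsucc f (w f v i)) != f (Lsucc f (w f v j)).
      by apply/negP => /eqP/finj e; rewrite e ltxx in hlt.
    have : f (Lsucc f (w f v i)) < f (Lsucc f (w f v j)) by rewrite ltn_neqAle hne h1.
    lia.
  rewrite (pout _ yC).
  have h1 := smin _ cy.
  have hne : f (Lsucc f (w f v i)) != f y.
    by apply/negP => /eqP/finj e; move: yC; rewrite -e sdef w_in.
  have : f (Lsucc f (w f v i)) < f y by rewrite ltn_neqAle hne h1.
  lia.
move=> x; rewrite /mk; case: (boolP (x \in C)) => [xC|xC]; last first.
  by rewrite (pout _ xC); have := fpos x; lia.
have ex : exists j, x == w f v j by case: (memC _ xC) => j ->; exists j.
case: (ex_minnP ex) => j /eqP xj jmin.
case: j xj jmin => [|j] xj jmin.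
  rewrite /predC; case: pickP => [p /andP[/memC[l ->] /andP[pl _]]|_]; last by rewrite xj fv.
  by rewrite xj in pl; move: (lt_le_trans pl (w_mono f v (leq0n l))); rewrite ltxx.
have pxle : (w f v j <= x)%O by rewrite xj w_mono.
have pxne : w f v j != x.
  by apply/negP => /eqP e; have := jmin j; rewrite e eqxx ltnn => /(_ isT).
have px : (w f v j < x)%O by rewrite lt_neqAle pxne pxle.
rewrite (@predC_eq C x (w f v j)) //; last first.
  move=> z /memC[l ->]; apply/negP => /andP[h1 h2].
  case: (leqP l j) => hl.
    by move: (lt_le_trans h1 (w_mono f v hl)); rewrite ltxx.
  by rewrite xj in h2; move: (lt_le_trans h2 (w_mono f v hl)); rewrite ltxx.
have pr : w f v j != r by apply: contraTneq px => ->; rewrite ltr_F.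
rewrite (pin _ (w_in j) pr).
have -> : Lsucc f (w f v j) = x by rewrite xj /w iterS.
by have := fpos x; lia.
Qed.


Lemma measure_lt (a c : P) : (a < c)%O -> #|[set u | (c < u)%O]| < #|[set u | (a < u)%O]|.
Proof.
move=> ac; apply: proper_card; apply/properP; split.
  by apply/subsetP => u; rewrite !inE => cu; apply: lt_trans ac cu.
by exists c; rewrite !inE ?ltxx.
Qed.

Lemma measure_lt' (a c : P) : (a < c)%O -> #|[set u | (u < a)%O]| < #|[set u | (u < c)%O]|.
Proof.
move=> ac; apply: proper_card; apply/properP; split.
  by apply/subsetP => u; rewrite !inE => cu; apply: lt_trans cu ac.
by exists a; rewrite !inE ?ltxx.
Qed.

Lemma pred_spec C x p : predC C x = Some p ->
  [/\ p \in C, (p < x)%O & forall z, z \in C -> ~~ ((p < z)%O && (z < x)%O)].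
Proof.
rewrite /predC; case: pickP => // q /andP[qC /andP[qx /forallP hq]] [<-].
by split => // z zC; have := hq z; rewrite zC.
Qed.

Lemma pred_exists C x y : chainb C -> y \in C -> (y < x)%O -> exists p, predC C x = Some p.
Proof.
move=> ch yC yx.
have H : (fun p => (p \in C) && (p < x)%O) y by rewrite /= yC yx.
case: (@arg_minnP _ y (fun p => (p \in C) && (p < x)%O) (fun p => #|[set u | (p < u)%O]|) H) => m /andP[mC mx] mmin.
exists m; apply: predC_eq => // z zC; apply/negP => /andP[mz zx].
have := mmin z; rewrite zC zx => /(_ isT); rewrite leqNgt (measure_lt mz) //.
Qed.

Lemma predC_none C x y : chainb C -> predC C x = None -> y \in C -> (y < x)%O = false.
Proof.
move=> ch hn yC; apply/negbTE/negP => yx.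
by case: (pred_exists ch yC yx) => p; rewrite hn.
Qed.

Section ChainC.
Variable C : {set P}.
Hypothesis CF : C \in chainF.

Lemma CG : C \subset G. Proof. by move: CF; rewrite inE => /and3P[]. Qed.
Lemma Cr : r \in C. Proof. by move: CF; rewrite inE => /and3P[]. Qed.
Lemma Cch : chainb C. Proof. by move: CF; rewrite inE => /and3P[]. Qed.

Lemma Cgold y : y \in C -> golden L y.
Proof. by move=> /(subsetP CG); rewrite inE. Qed.

Lemma mk_pos x : 0 < mk C x.
Proof. by rewrite /mk; case: (x \in C) => //; case: predC. Qed.

Lemma mk_le x : mk C x <= #|P|.
Proof.
rewrite /mk; case: (boolP (x \in C)) => xC.
  case e: predC => [p|]; last by apply/card_gt0P; exists r.
  have [_ px _] := pred_spec e.
  by apply: L_lt_n; apply: contraTneq px => ->; rewrite ltr_F.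
by apply: L_lt_n; apply: contraNneq xC => ->; exact: Cr.
Qed.

Lemma mk_in x : x \in C -> predC C x = None -> mk C x = 1.
Proof. by rewrite /mk => -> ->. Qed.

Lemma mk_inS x p : x \in C -> predC C x = Some p -> mk C x = (L p).+1.
Proof. by rewrite /mk => -> ->. Qed.

Lemma mk_out x : x \notin C -> mk C x = (L x).+1.
Proof. by rewrite /mk => /negbTE ->. Qed.

Lemma Lpos x : L x != 0.
Proof. by have := Lbd x; case: (L x). Qed.

Lemma pred_uniq x y p : x \in C -> y \in C -> predC C x = Some p -> predC C y = Some p -> x = y.
Proof.
move=> xC yC hx hy.
have [_ px hpx] := pred_spec hx; have [_ py hpy] := pred_spec hy.
case/orP: (chainP Cch xC yC); rewrite le_eqVlt => /orP[/eqP//|lt].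
  by have := hpy x xC; rewrite px lt.
by have := hpx y yC; rewrite py lt.
Qed.

Lemma mk_inj : injective (mk C).
Proof.
move=> x y.
case: (boolP (x \in C)) => xC; case: (boolP (y \in C)) => yC.
- case ex: (predC C x) => [p|]; case ey: (predC C y) => [q|].
  + rewrite (mk_inS xC ex) (mk_inS yC ey) => -[/Linj e]; subst q.
    exact: pred_uniq ex ey.
  + by rewrite (mk_inS xC ex) (mk_in yC ey) => -[] /eqP; rewrite (negbTE (Lpos _)).
  + by rewrite (mk_inS yC ey) (mk_in xC ex) => -[] /esym /eqP; rewrite (negbTE (Lpos _)).
  + move=> _; case/orP: (chainP Cch xC yC); rewrite le_eqVlt => /orP[/eqP//|lt].
      by have := predC_none Cch ey xC; rewrite lt.
    by have := predC_none Cch ex yC; rewrite lt.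
- rewrite (mk_out yC); case ex: (predC C x) => [p|].
    rewrite (mk_inS xC ex) => -[/Linj e]; subst y.
    by have [pC _ _] := pred_spec ex; rewrite pC in yC.
  by rewrite (mk_in xC ex) => -[] /esym /eqP; rewrite (negbTE (Lpos _)).
- rewrite (mk_out xC); case ey: (predC C y) => [q|].
    rewrite (mk_inS yC ey) => -[/Linj e]; subst x.
    by have [qC _ _] := pred_spec ey; rewrite qC in xC.
  by rewrite (mk_in yC ey) => -[] /eqP; rewrite (negbTE (Lpos _)).
- by rewrite (mk_out xC) (mk_out yC) => -[/Linj].
Qed.

Lemma Lsucc_mk y s : s \in C -> predC C s = Some y -> Lsucc (mk C) y = s.
Proof.
move=> sC hs; have [yC ys hys] := pred_spec hs.
apply: Lsucc_eq => //; first exact: mk_inj.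
move=> z yz; rewrite (mk_inS sC hs).
have gy := Cgold yC.
case: (boolP (z \in C)) => zC.
  have [q hq] := pred_exists Cch yC yz.
  have [qC qz hqz] := pred_spec hq.
  rewrite (mk_inS zC hq) ltnS.
  case/orP: (chainP Cch qC yC); rewrite le_eqVlt => /orP[/eqP->//|lt].
    by have := hqz y yC; rewrite lt yz.
  by move: gy => /forallP/(_ q)/implyP/(_ lt)/ltnW.
by rewrite (mk_out zC) ltnS; move: gy => /forallP/(_ z)/implyP/(_ yz)/ltnW.
Qed.

Lemma succ_exists y : y \in C -> y != r -> exists2 s, s \in C & predC C s = Some y.
Proof.
move=> yC yr.
have H : (fun s => (s \in C) && (y < s)%O) r by rewrite /= Cr lt_r.
case: (@arg_minnP _ r (fun s => (s \in C) && (y < s)%O) (fun s => #|[set u | (u < s)%O]|) H) => s /andP[sC ys] smin.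
exists s => //; apply: predC_eq => //; first exact: Cch.
move=> z zC; apply/negP => /andP[yz zs].
have := smin z; rewrite zC yz => /(_ isT); rewrite leqNgt (measure_lt' zs) //.
Qed.

Lemma min_exists : exists2 m, m \in C & predC C m = None.
Proof.
have H : (fun s => (s \in C)) r by rewrite /= Cr.
case: (@arg_minnP _ r (fun s => s \in C) (fun s => #|[set u | (u < s)%O]|) H) => m mC mmin.
exists m => //; case e: predC => [p|] //.
have [pC pm _] := pred_spec e.
by have := mmin p pC; rewrite leqNgt (measure_lt' pm).
Qed.

Lemma pc_mk : promotion_chain (mk C) = C.
Proof.
have [v vC hv] := min_exists.
rewrite /promotion_chain; case: pickP => [v' /eqP h|]; last first.
  by move/(_ v); rewrite (mk_in vC hv) eqxx.
have -> : v' = v by apply: mk_inj; rewrite h (mk_in vC hv).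
apply/setP => c; apply/imsetP/idP => [[i _ ->]|cC].
  elim: (nat_of_ord i) => [|i' IH] //; rewrite /w iterS -/(w _ _ _).
  case: (eqVneq (w (mk C) v i') r) => [->|hr']; first by rewrite Lsucc_r Cr.
  by case: (succ_exists IH hr') => s sC hs; rewrite (Lsucc_mk sC hs).
have key : forall j c, c \in C -> #|[set y in C | (y < c)%O]| = j -> c = w (mk C) v j.
  elim => [|j IH] c0 c0C.
    move/cards0_eq/setP => h0.
    case/orP: (chainP Cch c0C vC); rewrite le_eqVlt => /orP[/eqP->//|lt].
      by have := predC_none Cch hv c0C; rewrite lt.
    by have := h0 v; rewrite !inE vC lt.
  move=> hc.
  have [y0 hy0] : exists y, y \in [set y in C | (y < c0)%O].
    by apply/set0Pn; rewrite -card_gt0 hc.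
  move: hy0; rewrite inE => /andP[y0C y0c].
  have [p hp] := pred_exists Cch y0C y0c.
  have [pC pc hpc] := pred_spec hp.
  have eset : [set y in C | (y < c0)%O] = p |: [set y in C | (y < p)%O].
    apply/setP => y; rewrite !inE; apply/idP/idP => [/andP[yC yc]|].
      case/orP: (chainP Cch yC pC); rewrite le_eqVlt => /orP[/eqP->|lt].
      - by rewrite eqxx.
      - by rewrite yC lt orbT.
      - by rewrite eqxx.
      - by have := hpc y yC; rewrite lt yc.
    case/orP => [/eqP->|/andP[yC yp]]; first by rewrite pC pc.
    by rewrite yC (lt_trans yp pc).
  move: hc; rewrite eset cardsU1 inE ltxx andbF add1n => -[] /(IH p pC) pj.
  by rewrite /w iterS -/(w (mk C) v j) -pj (Lsucc_mk c0C hp).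
have hb : #|[set y in C | (y < c)%O]| < #|P|.
  rewrite -cardsT; apply: proper_card; apply/properP; split; first exact: subsetT.
  by exists c; rewrite ?inE ?ltxx ?andbF.
exists (Ordinal hb) => //=; exact: key.
Qed.

Lemma prom_mk x : promotion (mk C) x = L x.
Proof.
rewrite /promotion pc_mk max_r; case: (boolP (x \in C)) => xC; last by rewrite mk_out.
case: (eqVneq x r) => [->|xr]; first by rewrite hr.
case: (succ_exists xC xr) => s sC hs.
by rewrite (Lsucc_mk sC hs) (mk_inS sC hs).
Qed.

Lemma mem_mk x : (x \in C) = (mk C x != (L x).+1).
Proof.
case: (boolP (x \in C)) => xC; last by rewrite mk_out ?eqxx.
case e: (predC C x) => [p|].
  rewrite (mk_inS xC e) eqSS; apply/esym/negP => /eqP/Linj ep.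
  by have [_ px _] := pred_spec e; rewrite ep ltxx in px.
by rewrite (mk_in xC e) eqSS eq_sym Lpos.
Qed.

End ChainC.




Definition mkL (C : {set P}) : {ffun P -> 'I_#|P|.+1} := [ffun x => inord (mk C x)].

Lemma card_preimL : promotion_preimage_card L = #|chainF|.
Proof.
have e : [set L' in labelings |
      [forall x, promotion (fun y => nat_of_ord (L' y)) x == L x]] = mkL @: chainF.
  apply/setP => L'; rewrite inE; apply/andP/imsetP.
    move=> [hl /forallP hp]; move: hl; rewrite inE => /andP[/injectiveP hinj /forallP hpos].
    set f := fun y => nat_of_ord (L' y).
    have finj : injective f by move=> x y /val_inj; apply: hinj.
    have fb : forall x, 1 <= f x <= #|P|.
      by move=> x; rewrite /f hpos /= -ltnS ltn_ord.
    have hn : 0 < #|P| by apply/card_gt0P; exists r.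
    have h1 : 1 <= 1 <= #|P| by rewrite leqnn hn.
    have [v fv] := @lab_surj _ _ f finj fb 1 h1.
    have [CF hmk] := chain_of finj hpos (ex_intro _ v fv) (fun x => eqP (hp x)).
    exists (promotion_chain f) => //; apply/ffunP => x; rewrite ffunE; apply: val_inj.
    by rewrite /= inordK ?hmk // ltn_ord.
  move=> [C CF ->]; split.
    rewrite inE; apply/andP; split.
      apply/injectiveP => x y; rewrite !ffunE => /(congr1 val).
      by rewrite /= !inordK ?ltnS ?mk_le // => /(mk_inj CF).
    by apply/forallP => x; rewrite ffunE inordK ?ltnS ?mk_le // mk_pos.
  have -> : (fun y => nat_of_ord (mkL C y)) = mk C.
    by apply: functional_extensionality => y; rewrite ffunE inordK // ltnS mk_le.
  by apply/forallP => x; rewrite prom_mk.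
rewrite /promotion_preimage_card e card_in_imset //.
move=> C1 C2 C1F C2F h.
have hm x : mk C1 x = mk C2 x.
  have := congr1 (fun g : {ffun P -> 'I_#|P|.+1} => nat_of_ord (g x)) h.
  by rewrite /= !ffunE !inordK ?ltnS ?mk_le.
by apply/setP => x; rewrite (mem_mk C1) (mem_mk C2) hm.
Qed.


Definition A x := [set y | golden L y & (x < y)%O].
Definition minC (C : {set P}) := odflt r [pick x in C | [forall y in C, (x <= y)%O]].

Lemma minC_spec C : C \in chainF -> minC C \in C /\ forall y, y \in C -> (minC C <= y)%O.
Proof.
move=> CF; rewrite /minC; case: pickP => [m /andP[mC /forallP hm]|].
  by split => // y yC; have := hm y; rewrite yC.
have [m mC hm] := min_exists CF.
move/(_ m); rewrite mC /=; move/negP; case; apply/forallP => y; apply/implyP => yC.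
case/orP: (chainP (Cch CF) mC yC) => // ym; rewrite le_eqVlt in ym.
case/orP: ym => [/eqP->//|ym]; by have := predC_none (Cch CF) hm yC; rewrite ym.
Qed.

Lemma golden_le x y : golden L x -> (x < y)%O -> L x < L y.
Proof. by move=> /forallP/(_ y)/implyP. Qed.

Lemma fib x : x \in G -> #|[set C in chainF | minC C == x]| = 2 ^ (#|A x|).-1.
Proof.
move=> xG.
set B := A x :\ r.
have e : [set C in chainF | minC C == x] = (fun D => x |: (r |: D)) @: powerset B.
  apply/setP => C; rewrite inE; apply/andP/imsetP.
    move=> [CF /eqP mx]; have [mC mle] := minC_spec CF; rewrite mx in mC mle.
    exists (C :\: [set x; r]).
      rewrite powersetE; apply/subsetP => y; rewrite !inE negb_or => /andP[/andP[yx yr] yC].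
      rewrite yr /=; have := Cgold CF yC => ->; rewrite /= lt_neqAle eq_sym yx mle //.
    apply/setP => y; rewrite !inE; case: (eqVneq y x) => [->//|_]; case: (eqVneq y r) => [->|] //=.
    by rewrite (Cr CF).
  move=> [D]; rewrite powersetE => hD ->.
  have hD' y : y \in D -> [/\ golden L y, (x < y)%O & y != r].
    by move/(subsetP hD); rewrite !inE => /andP[-> /andP[-> ->]].
  have ge y : y \in x |: (r |: D) -> (x <= y)%O.
    rewrite !inE => /orP[/eqP->//|/orP[/eqP->//|/hD'[_ /ltW //]]].
  have CF : x |: (r |: D) \in chainF.
    rewrite inE; apply/and3P; split.
    - apply/subsetP => y; rewrite !inE => /orP[/eqP->|/orP[/eqP->|/hD'[-> _ _]]] //.
        by move: xG; rewrite inE.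
      exact: r_golden.
    - by rewrite !inE eqxx orbT.
    - apply/forallP => y; apply/implyP => /ge yx; apply/forallP => z; apply/implyP => /ge zx.
      exact: up_chain yx zx.
  split => //.
  have [mC mle] := minC_spec CF.
  by rewrite eq_le mle ?ge // !inE eqxx.
rewrite e card_in_imset; last first.
  move=> D1 D2; rewrite !powersetE => h1 h2 eq12; apply/setP => y.
  have := congr1 (fun S : {set P} => y \in S) eq12; rewrite /= !inE.
  case: (boolP (y \in D1)) => y1; case: (boolP (y \in D2)) => y2 //.
    by have := subsetP h1 _ y1; rewrite !inE => /andP[yr /andP[_ xy]]; rewrite (negbTE yr) (gt_eqF xy).
  by have := subsetP h2 _ y2; rewrite !inE => /andP[yr /andP[_ xy]]; rewrite (negbTE yr) (gt_eqF xy).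
rewrite card_powerset /B; congr (2 ^ _).
case: (eqVneq x r) => [->|xr].
  have -> : A r = set0 by apply/setP => y; rewrite !inE ltr_F andbF.
  by rewrite set0D cards0.
have : r \in A x by rewrite inE r_golden lt_r.
by move=> h; rewrite (cardsD1 r (A x)) h add1n.
Qed.

Lemma card_chainF : #|chainF| = \sum_(x in G) 2 ^ (#|A x|).-1.
Proof.
rewrite -sum1_card (partition_big minC (fun x => x \in G)); last first.
  move=> C CF; have [mC _] := minC_spec CF; exact: (subsetP (CG CF)).
apply: eq_bigr => x xG; rewrite -(fib xG) -sum1_card.
by apply: eq_bigl => C; rewrite inE.
Qed.


Lemma cover_below (x z : P) : (x < z)%O -> exists2 a, (x <= a)%O & covers_in setT a z.
Proof.
move=> xz.
have H : (fun c => (x <= c)%O && (c < z)%O) x by rewrite /= lexx xz.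
case: (@arg_minnP _ x (fun c => (x <= c)%O && (c < z)%O) (fun c => #|[set u : P | (c < u)%O]|) H) => m /andP[xm mz] mmin.
exists m => //.
rewrite /covers_in !in_setT mz /=; apply/existsP => -[t /and3P[_ mt tz]].
have := mmin t; rewrite tz (le_trans xm (ltW mt)) => /(_ isT).
by rewrite leqNgt (measure_lt mt).
Qed.

Lemma comp_b (b : P) : is_highest_branch_vertex b -> forall x, (b <= x)%O || (x < b)%O.
Proof.
rewrite /is_highest_branch_vertex; case: ifP => [_ /andP[_ /forallP hb]|_ /forallP hb] x; last by rewrite hb.
apply/negPn/negP; rewrite negb_or => /andP[nbx nxb].
have nxb' : ~~ (x <= b)%O by apply: contra nxb => h; rewrite lt_neqAle h andbT; apply: contraNneq nbx => ->.
have H : (fun c => (x <= c)%O && (b <= c)%O) r by rewrite /= !rtop.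
case: (@arg_minnP _ r (fun c => (x <= c)%O && (b <= c)%O) (fun c => #|[set u : P | (u < c)%O]|) H) => z /andP[xz bz] zmin.
have xz' : (x < z)%O by rewrite lt_neqAle xz andbT; apply: contraNneq nbx => ->.
have bz' : (b < z)%O by rewrite lt_neqAle bz andbT; apply: contraNneq nxb' => ->.
have [a xa az] := cover_below xz'.
have [a' ba az'] := cover_below bz'.
have aa : a != a'.
  apply/negP => /eqP e; subst a'.
  have az2 : (a < z)%O by move: az => /and4P[].
  by have := zmin a; rewrite xa ba => /(_ isT); rewrite leqNgt (measure_lt' az2).
have := hb z; rewrite /is_branch.
have -> : 1 < #|[set y | covers_in setT y z]|.
  apply: (@leq_trans #|[set a; a']|); first by rewrite cards2 aa.
  by apply: subset_leq_card; apply/subsetP => y; rewrite !inE => /orP[] /eqP->.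
move=> /= zb.
by move: (lt_le_trans bz' zb); rewrite ltxx.
Qed.

Lemma chain_sum n (S : {set P}) : #|S| = n ->
  (forall y z, y \in S -> z \in S -> (y <= z)%O || (z <= y)%O) ->
  \sum_(x in S) 2 ^ (#|[set y in S | (x < y)%O]|).-1 = (2 ^ n)./2.
Proof.
elim: n S => [|n IH] S hS hc.
  by rewrite (cards0_eq hS) big_set0.
have [m mS] : exists m, m \in S by apply/set0Pn; rewrite -card_gt0 hS.
have H : (fun c => c \in S) m by [].
case: (@arg_minnP _ m (fun c => c \in S) (fun c => #|[set u : P | (u < c)%O]|) H) => {H mS} m mS mmin.
have mle y : y \in S -> (m <= y)%O.
  move=> yS; case/orP: (hc _ _ mS yS) => // ym.
  rewrite le_eqVlt in ym; case/orP: ym => [/eqP->//|ym].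
  by have := mmin y yS; rewrite leqNgt (measure_lt' ym).
rewrite (bigD1 m) //=.
have e1 : [set y in S | (m < y)%O] = S :\ m.
  apply/setP => y; rewrite !inE; case: (boolP (y \in S)) => yS; rewrite ?andbF //.
  by rewrite andbT lt_def eq_sym mle ?andbT.
have hS' : #|S :\ m| = n by move: hS; rewrite (cardsD1 m) mS add1n => -[].
rewrite e1 hS'.
have -> : \sum_(i in S | i != m) 2 ^ (#|[set y in S | (i < y)%O]|).-1 =
          \sum_(i in S :\ m) 2 ^ (#|[set y in S :\ m | (i < y)%O]|).-1.
  apply: eq_big => [i|i]; first by rewrite !inE andbC.
  move=> /andP[iS im].
  suff -> : [set y in S | (i < y)%O] = [set y in S :\ m | (i < y)%O] by [].
  apply/setP => y; rewrite !inE.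
  case: (eqVneq y m) => [->|] //=.
  by rewrite mS /=; apply/negbTE/negP => im'; move: (le_lt_trans (mle _ iS) im'); rewrite ltxx.
rewrite (IH (S :\ m)) //; last by move=> y z; rewrite !inE => /andP[_ ?] /andP[_ ?]; apply: hc.
case: n {IH hS hS' e1} => [|n] //=.
by rewrite !expnS !mul2n !doubleK addnn.
Qed.

Definition Gb (b : P) := golden_below L b.
Definition RT (b : P) (S : {set P}) := (S \subset Gb b) && is_rooted_tree_on S.

Lemma cov_any (S : {set P}) x y1 y2 : covers_in S x y1 -> covers_in S x y2 -> y1 = y2.
Proof.
move=> /and4P[_ y1S xy1 /existsP n1] /and4P[_ y2S xy2 /existsP n2].
case/orP: (up_chain (ltW xy1) (ltW xy2)); rewrite le_eqVlt => /orP[/eqP//|lt].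
  by case: n2; exists y1; rewrite y1S xy1 lt.
by case: n1; exists y2; rewrite y2S xy2 lt.
Qed.

Lemma rt_covers (S : {set P}) :
  [forall x, forall y1, forall y2, covers_in S x y1 ==> covers_in S x y2 ==> (y1 == y2)].
Proof.
apply/forallP => x; apply/forallP => y1; apply/forallP => y2; apply/implyP => h1; apply/implyP => h2.
by rewrite (cov_any h1 h2).
Qed.

Lemma conn_mono (S U : {set P}) x y : S \subset U ->
  connect (comp_rel_in S) x y -> connect (comp_rel_in U) x y.
Proof.
move=> sub; apply: connect_sub => u v /and3P[uS vS uv]; apply: connect1.
by rewrite /comp_rel_in (subsetP sub _ uS) (subsetP sub _ vS).
Qed.

Lemma rt_union (S1 S2 : {set P}) z : is_rooted_tree_on S1 -> is_rooted_tree_on S2 ->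
  z \in S1 -> z \in S2 -> is_rooted_tree_on (S1 :|: S2).
Proof.
move=> /and3P[_ /forallP c1 _] /and3P[_ /forallP c2 _] z1 z2.
apply/and3P; split; last exact: rt_covers.
  by apply/set0Pn; exists z; rewrite inE z1.
have h1 u v : u \in S1 -> v \in S1 -> connect (comp_rel_in (S1 :|: S2)) u v.
  move=> uS vS; apply: (conn_mono (S := S1)); first exact: subsetUl.
  by have := c1 u; rewrite uS => /forallP/(_ v); rewrite vS.
have h2 u v : u \in S2 -> v \in S2 -> connect (comp_rel_in (S1 :|: S2)) u v.
  move=> uS vS; apply: (conn_mono (S := S2)); first exact: subsetUr.
  by have := c2 u; rewrite uS => /forallP/(_ v); rewrite vS.
apply/forallP => u; apply/implyP => hu; apply/forallP => v; apply/implyP => hv.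
have hz1 : forall t, t \in S1 :|: S2 -> connect (comp_rel_in (S1 :|: S2)) t z.
  by move=> t; rewrite inE => /orP[] ?; [apply: h1|apply: h2].
have hz2 : forall t, t \in S1 :|: S2 -> connect (comp_rel_in (S1 :|: S2)) z t.
  by move=> t; rewrite inE => /orP[] ?; [apply: h1|apply: h2].
exact: connect_trans (hz1 _ hu) (hz2 _ hv).
Qed.

Lemma rt_chain (S : {set P}) : S != set0 ->
  (forall u v, u \in S -> v \in S -> (u <= v)%O || (v <= u)%O) -> is_rooted_tree_on S.
Proof.
move=> ne hc; apply/and3P; split => //; last exact: rt_covers.
apply/forallP => u; apply/implyP => hu; apply/forallP => v; apply/implyP => hv.
by apply: connect1; rewrite /comp_rel_in hu hv; apply: hc.
Qed.


Variable (b : P).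
Hypothesis hb : is_highest_branch_vertex b.

Let M := maxGoldenSubtrees L b.

Lemma Mspec T : T \in M -> RT b T /\ forall B, RT b B -> T \subset B -> B = T.
Proof. by rewrite inE => /maxsetP. Qed.

Lemma M_sub T : T \in M -> T \subset Gb b.
Proof. by case/Mspec => /andP[]. Qed.

Lemma M_up T x y : T \in M -> x \in T -> y \in Gb b -> (x <= y)%O -> y \in T.
Proof.
move=> TM xT yG xy; have [/andP[sT rT] mx] := Mspec TM.
have e : T :|: [set x; y] = T.
  apply: mx; last exact: subsetUl.
  apply/andP; split.
    rewrite subUset sT /=; apply/subsetP => u; rewrite in_set2 => /orP[] /eqP->; [exact: (subsetP sT) | exact: yG].
  apply: (rt_union (z := x)) => //; last by rewrite !inE eqxx.
  apply: rt_chain; first by apply/set0Pn; exists x; rewrite !inE eqxx.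
  by move=> u v; rewrite !inE => /orP[] /eqP-> /orP[] /eqP->; rewrite ?lexx ?xy ?orbT.
by rewrite -e !inE eqxx !orbT.
Qed.

Lemma M_disj T1 T2 x : T1 \in M -> T2 \in M -> x \in T1 -> x \in T2 -> T1 = T2.
Proof.
move=> T1M T2M x1 x2.
have [/andP[s1 r1] m1] := Mspec T1M; have [/andP[s2 r2] m2] := Mspec T2M.
have RU : RT b (T1 :|: T2) by rewrite /RT subUset s1 s2 /=; exact: rt_union r1 r2 x1 x2.
by rewrite -(m1 _ RU (subsetUl _ _)) (m2 _ RU (subsetUr _ _)).
Qed.

Lemma M_triv : trivIset M.
Proof.
apply/trivIsetP => T1 T2 T1M T2M ne.
rewrite -setI_eq0; apply/eqP/setP => y; rewrite !inE; apply/negbTE/negP => /andP[y1 y2].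
by move: ne; rewrite (M_disj T1M T2M y1 y2) eqxx.
Qed.

Lemma M_cover : cover M = Gb b.
Proof.
apply/setP => x; apply/bigcupP/idP => [[T TM xT]|xG]; first exact: (subsetP (M_sub TM)).
have RT1 : RT b [set x].
  rewrite /RT sub1set xG /=; apply: rt_chain; first by apply/set0Pn; exists x; rewrite inE.
  by move=> u v; rewrite !inE => /eqP-> /eqP->; rewrite lexx.
case: (maxset_exists RT1) => T TM; rewrite sub1set => xT.
by exists T => //; rewrite inE.
Qed.

Lemma memGb y : (y \in Gb b) = golden L y && (y < b)%O.
Proof. by rewrite /Gb /golden_below inE. Qed.

Lemma omega_eq T x : T \in M -> x \in T -> omega T x = #|[set y in Gb b | (x <= y)%O]|.
Proof.
move=> TM xT; apply: eq_card => y; rewrite !inE.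
case: (boolP (x <= y)%O) => xy; rewrite ?andbF ?andbT //.
apply/idP/idP => [yT|yG]; first by rewrite -memGb (subsetP (M_sub TM)).
by apply: M_up TM xT _ xy; rewrite memGb.
Qed.

Lemma Gb_lt x : x \in Gb b -> golden L x /\ (x < b)%O.
Proof. by rewrite /Gb /golden_below inE => /andP[]. Qed.

Lemma count_eq x : x \in Gb b ->
  #|[set y in Gb b | (x <= y)%O]| + #|[set y | golden L y & (b <= y)%O]| = #|A x| + 1.
Proof.
move=> xG; have [gx xb] := Gb_lt xG.
have e1 : [set y | golden L y & (x <= y)%O] = x |: A x.
  apply/setP => y; rewrite !inE; case: (eqVneq y x) => [->|yx] /=; first by rewrite gx lexx.
  by rewrite lt_neqAle eq_sym yx.
have e2 : [set y | golden L y & (x <= y)%O] =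
          [set y in Gb b | (x <= y)%O] :|: [set y | golden L y & (b <= y)%O].
  apply/setP => y; rewrite !inE /Gb /golden_below ?inE.
  case: (boolP (golden L y)) => gy //=.
  case/orP: (comp_b hb y) => h.
    by rewrite h (le_trans (ltW xb) h) andbT orbT.
  have nby : (b <= y)%O = false by apply/negbTE/negP => bl; move: (lt_le_trans h bl); rewrite ltxx.
  by rewrite h nby orbF.
have disj : [set y in Gb b | (x <= y)%O] :&: [set y | golden L y & (b <= y)%O] = set0.
  apply/setP => y; rewrite !inE /Gb /golden_below ?inE.
  apply/negbTE/negP => /andP[/andP[/andP[_ yb] _] /andP[_ hby]].
  by move: (lt_le_trans yb hby); rewrite ltxx.
have := congr1 (fun S : {set P} => #|S|) e2; rewrite /= cardsU disj cards0 subn0 => <-.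
rewrite e1 cardsU1 inE ltxx andbF addnC.
done.
Qed.

Lemma rhs_eq :
  let k := #|[set x : P | golden L x & (b <= x)%O]| in
  (2 ^ k.-1 + \sum_(T in M) \sum_(x in T) 2 ^ (omega T x + k - 2))%N =
  \sum_(x in G) 2 ^ (#|A x|).-1.
Proof.
move=> k.
set Sb := [set x : P | golden L x & (b <= x)%O].
have -> : \sum_(T in M) \sum_(x in T) 2 ^ (omega T x + k - 2) =
          \sum_(T in M) \sum_(x in T) 2 ^ (#|A x|).-1.
  apply: eq_bigr => T TM; apply: eq_bigr => x xT.
  have xG : x \in Gb b by apply: (subsetP (M_sub TM)).
  rewrite (omega_eq TM xT); have := count_eq xG; rewrite -/k => h.
  congr (2 ^ _); lia.
rewrite -(@big_trivIset _ _ _ _ M (fun x => 2 ^ (#|A x|).-1) M_triv) M_cover.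
rewrite [in RHS](bigID (fun x => b <= x)%O) /=; congr (_ + _).
  have hk : 0 < k by apply/card_gt0P; exists r; rewrite inE r_golden rtop.
  have -> : 2 ^ k.-1 = (2 ^ k)./2 by case: k hk => // k' _ /=; rewrite expnS mul2n doubleK.
  rewrite -(@chain_sum k Sb) //; last first.
    move=> y z; rewrite /Sb !inE => /andP[_ hy] /andP[_ hz]; exact: up_chain hy hz.
  apply: esym; apply: eq_big => [x|x]; first by rewrite !inE.
  move=> /andP[xG bx].
  suff -> : A x = [set y in Sb | (x < y)%O] by [].
  apply/setP => y; rewrite !inE.
  case: (boolP (x < y)%O) => xy; rewrite ?andbF ?andbT //.
  by rewrite (le_trans bx (ltW xy)) andbT.
apply: eq_bigl => x; rewrite /Gb /golden_below !inE.
case: (boolP (golden L x)) => //= _.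
case/orP: (comp_b hb x) => h.
  by rewrite h /=; apply/negbTE/negP => h'; move: (lt_le_trans h' h); rewrite ltxx.
rewrite h; apply/esym/negP => h'; move: (lt_le_trans h h'); rewrite ltxx.
by [].
Qed.

End Tree.

Unset Implicit Arguments.
Theorem mainTheorem3 (d : Order.disp_t) (P : finPOrderType d)
    (L : P -> nat) (b : P) :
  is_rooted_tree (P := P) ->
  is_labeling L ->
  (forall x y : P, L x = #|P| -> (y <= x)%O) ->
  is_highest_branch_vertex b ->
  let k := #|[set x : P | golden L x & (b <= x)%O]| in
  promotion_preimage_card L =
    (2 ^ k.-1 +
     \sum_(T in maxGoldenSubtrees L b) \sum_(x in T) 2 ^ (omega T x + k - 2))%N.
Proof.
move=> htr [Linj Lbd] htop hb k.
move: htr => /and3P[ne _ /forallP hc].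
have htree : forall x y1 y2 : P, covers_in setT x y1 -> covers_in setT x y2 -> y1 = y2.
  move=> x y1 y2 h1 h2; have := hc x => /forallP/(_ y1)/forallP/(_ y2).
  by rewrite h1 h2 => /eqP.
have hn : 0 < #|P| by case/set0Pn: ne => x _; apply/card_gt0P; exists x.
have hv : 1 <= #|P| <= #|P| by rewrite hn leqnn.
have [r hr] := lab_surj Linj Lbd hv.
have rtop : forall y, (y <= r)%O by move=> y; apply: htop hr.
rewrite (card_preimL rtop Linj Lbd hr) (card_chainF htree rtop).
exact: (esym (rhs_eq htree rtop hr hb)).
Qed.
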